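(* In the family of directed acyclic graphs, the Geometric Mechanism satisfies incentive compatibility and fairness.
   Context: Setting: agents $N=\{1,\dots,n\}$ form a directed acyclic graph (DAG); an edge $(i,j)$ means $i$ follows $j$. Agent $i$'s type $\theta_i$ is her set of true out-edges; she reports $\theta_i'\subseteq\theta_i$ (she can only hide edges). $G(\theta')$ is the graph built from the report profile $\theta'$. $P_i$ is the set of agents that can reach $i$ by a directed path (including $i$), and $p_i=|P_i|$ is $i$'s progeny. Write $p_i\succ p_j$ if $p_i>p_j$, or $p_i=p_j$ and $i<j$. A selection mechanism maps each report profile to selection probabilities $x_i(\theta')\in[0,1]$ with $\sum_i x_i(\theta')\le 1$. Influential node: agent $i$ is influential in $G(\theta')$ if, after deleting all of $i$'s out-edges (profile $(\theta'_{-i},\emptyset)$), $p_i\succ p_j$ for all $j\neq i$ in that modified graph. The influential set $S^{inf.}(G(\theta'))=\{s_1,\dots,s_m\}$ is the set of influential nodes, ordered so that $s_1\succ s_2\succ\cdots\succ s_m$ by progeny in $G(\theta')$. Geometric Mechanism: compute $S^{inf.}(G(\theta'))=\{s_1,\dots,s_m\}$; select $s_j$ with probability $1/2^{m-j+1}$, and every agent outside the influential set with probability $0$. Incentive compatibility: for all $N$, all $i$, all true profiles $\theta$, all $\theta'_{-i}$ with $\theta'_k\subseteq\theta_k$ for $k\neq i$, and all $\theta_i'\subseteq\theta_i$, $x_i((\theta_i,\theta'_{-i}))\ge x_i((\theta_i',\theta'_{-i}))$. Fairness: for a graph $G=(N,E)$, let $G(i)=(P_i,E_i)$ be the subgraph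 induced by $i$'s progeny, with $E_i=\{(j,k)\in E: j,k\in P_i\}$. A mechanism is fair if for all $N$ and all DAGs $G,G'$ on $n$ nodes with $S^{inf.}(G)=S^{inf.}(G')=\{s_1,\dots,s_m\}$ and $G(s_1)=G'(s_1)$, we have $x_{s_1}(G)=x_{s_1}(G')$. *)

(* Defs.v *)
(* Agents are 'I_n (agent k <-> paper's agent k+1). *)
From mathcomp Require Import all_boot all_order all_algebra.
Set Implicit Arguments. Unset Strict Implicit. Unset Printing Implicit Defensive.
Import Order.TTheory GRing.Theory Num.Theory.

(* A (report) profile: theta i = set of out-edges of i (i follows j iff j \in theta i). *)
Definition profile (n : nat) := 'I_n -> {set 'I_n}.

Definition edge n (th : profile n) : rel 'I_n := fun i j => j \in th i.

Definition acyclic n (th : profile n) : Prop :=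
  forall i j : 'I_n, edge th i j -> ~~ connect (edge th) j i.

Definition progeny n (th : profile n) (i : 'I_n) : {set 'I_n} :=
  [set j | connect (edge th) j i].

Definition prog n (th : profile n) (i : 'I_n) : nat := #|progeny th i|.

Definition succ n (th : profile n) (i j : 'I_n) : bool :=
  (prog th j < prog th i)%N || ((prog th i == prog th j) && (i < j)%N).

Definition update n (th : profile n) (i : 'I_n) (s : {set 'I_n}) : profile n :=
  fun k => if k == i then s else th k.

Definition influential n (th : profile n) (i : 'I_n) : bool :=
  [forall j : 'I_n, (j != i) ==> succ (update th i set0) i j].

Definition inf_seq n (th : profile n) : seq 'I_n :=
  sort (fun a b => (a == b) || succ th a b) [seq i <- enum 'I_n | influential th i].

(* Geometric Mechanism: s_j (1-based index j) gets 1/2^(m-j+1); others get 0.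
   With 0-based index idx = j-1, m - j + 1 = m - idx. *)
Definition geometric n (th : profile n) (i : 'I_n) : rat :=
  (if influential th i
  then (((2 ^ (size (inf_seq th) - index i (inf_seq th)))%N)%:R)^-1
  else 0)%R.

(* Main.v *)
Require Import Defs.
From mathcomp Require Import all_boot all_order all_algebra.
From mathcomp Require Import zify.
From Stdlib Require Import FunctionalExtensionality.
Import Order.TTheory GRing.Theory Num.Theory.

Section Aux.
Variable n : nat.
Implicit Types (th G : profile n) (i j k u v x y : 'I_n).

Lemma conn_gen (e1 e2 : rel 'I_n) y :
  (forall u v, u != y -> connect e1 u y -> e1 u v -> e2 u v) ->
  forall x, connect e1 x y -> connect e2 x y.
Proof.
move=> H x /connectP [p]; elim: p x => [|v p IH] x /=.
  by move=> _ ->; exact: connect0.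
case/andP=> exv pv ly.
case: (eqVneq x y) => [->|nxy]; first exact: connect0.
have cxy : connect e1 x y by apply/connectP; exists (v :: p) => //=; rewrite exv.
exact: connect_trans (connect1 (H _ _ nxy cxy exv)) (IH _ pv ly).
Qed.

Lemma conn_mono (e1 e2 : rel 'I_n) x y :
  (forall u v, e1 u v -> e2 u v) -> connect e1 x y -> connect e2 x y.
Proof. move=> H; apply: conn_gen => u v _ _; exact: H. Qed.

Lemma edge_update th i s u v :
  edge (update th i s) u v = if u == i then v \in s else edge th u v.
Proof. by rewrite /edge /update; case: (u == i). Qed.

Lemma noncycle th G a b : acyclic th -> (forall u, G u \subset th u) ->
  connect (edge G) a b -> connect (edge G) b a -> a = b.
Proof.
move=> ac sub; case: (eqVneq a b) => // nab.
move/connectP=> [[|v p] /= pth la]; first by rewrite la eqxx in nab.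
case/andP: pth => eav pv.
have cvb : connect (edge G) v b by apply/connectP; exists p.
move=> cba.
have eth : edge th a v by rewrite /edge; apply: (subsetP (sub a)).
have cva : connect (edge th) v a.
  apply: (@conn_mono (edge G)); last exact: connect_trans cvb cba.
  by move=> u w; rewrite /edge => /(subsetP (sub u)).
by move: (ac _ _ eth); rewrite cva.
Qed.

Lemma succ_asym th a b : succ th a b -> succ th b a -> False.
Proof. rewrite /succ => *; lia. Qed.

Definition rr th := fun a b : 'I_n => (a == b) || succ th a b.

Lemma rr_trans th : transitive (rr th).
Proof.
move=> b a c; rewrite /rr /succ.
case: (eqVneq a b) => [->//|_]; case: (eqVneq b c) => [<-|_] /=; first by move->; rewrite orbT.
move=> *; apply/orP; right; lia.
Qed.

Lemma rr_total th : total (rr th).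
Proof.
move=> a b; rewrite /rr /succ.
case: (eqVneq a b) => [->|nab] /=; first by [].
move: nab; rewrite -val_eqE /= => nab; lia.
Qed.

Lemma count_sorted th (s : seq 'I_n) i : sorted (rr th) s -> i \in s ->
  (size s - index i s)%N = count (rr th i) s.
Proof.
elim: s => [//|x s IH] /= ps; rewrite in_cons.
have all_x := order_path_min (@rr_trans th) ps.
case: (eqVneq x i) => [<- _|nxi] /=.
  rewrite /rr eqxx /= subn0 add1n; congr S; apply/esym/eqP; rewrite -all_count.
  exact: all_x.
move=> his.
have : rr th x i by move/allP: all_x; apply.
rewrite /rr (negbTE nxi) /= => sxi.
rewrite eq_sym (negbTE nxi) /=.
have -> : succ th i x = false.
  apply/negP => sx; exact: succ_asym sxi sx.
rewrite add0n subSS; exact: IH (path_sorted ps) his.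
Qed.

Lemma count_inf th i : influential th i ->
  (size (inf_seq th) - index i (inf_seq th))%N =
  count (fun j => influential th j && rr th i j) (enum 'I_n).
Proof.
move=> hi; rewrite (@count_sorted th).
- rewrite /inf_seq (permP (permEl (perm_sort _ _))) count_filter.
  by apply: eq_count => j /=; rewrite andbC.
- exact: sort_sorted (@rr_total th) _.
- by rewrite /inf_seq mem_sort mem_filter hi mem_enum.
Qed.

Lemma prog_eq th1 th2 a : (forall x, connect (edge th1) x a = connect (edge th2) x a) ->
  prog th1 a = prog th2 a.
Proof.
move=> H; rewrite /prog /progeny; apply: eq_card => x.
by rewrite !inE H.
Qed.

Lemma prog_le th1 th2 a : (forall u v, edge th1 u v -> edge th2 u v) ->
  (prog th1 a <= prog th2 a)%N.
Proof.
move=> H; rewrite /prog /progeny; apply: subset_leq_card; apply/subsetP => x.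
rewrite !inE; exact: conn_mono.
Qed.

Lemma prog_self th s j : prog (update th j s) j = prog th j.
Proof.
apply: prog_eq => x; apply/idP/idP; apply: conn_gen => u v nuj _;
  by rewrite edge_update (negbTE nuj).
Qed.

Lemma edge_rm th j u v : edge (update th j set0) u v -> edge th u v.
Proof. by rewrite edge_update; case: ifP; rewrite ?inE. Qed.

Lemma prog_update_nreach th j i : ~~ connect (edge th) j i ->
  prog (update th j set0) i = prog th i.
Proof.
move=> nji; apply: prog_eq => x; apply/idP/idP; apply: conn_gen => u v _ cui.
- rewrite edge_update; case: (eqVneq u j) => // euj; subst u.
  have : connect (edge th) j i by exact: (conn_mono _ _ _ _ (@edge_rm th j) cui).
  by rewrite (negbTE nji).
- rewrite edge_update; case: (eqVneq u j) => // euj; subst u.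
  by rewrite cui in nji.
Qed.

Lemma succ_congr th1 th2 a b : prog th1 a = prog th2 a -> prog th1 b = prog th2 b ->
  succ th1 a b = succ th2 a b.
Proof. by rewrite /succ => -> ->. Qed.

End Aux.
Arguments count_inf {n th i}.
Arguments prog_self {n}.
Arguments prog_update_nreach {n th j i}.
Arguments noncycle {n th G a b}.
Arguments succ_congr {n th1 th2 a b}.
Arguments conn_gen {n e1 e2 y}.
Arguments prog_eq {n th1 th2 a}.
Arguments prog_le {n th1 th2 a}.
Arguments succ_asym {n th a b}.

Local Open Scope ring_scope.

Theorem theorem1 :
  (* Incentive compatibility *)
  (forall (n : nat) (th th' : profile n) (i : 'I_n) (ti : {set 'I_n}),
     acyclic th ->
     (forall k : 'I_n, k != i -> th' k \subset th k) ->
     ti \subset th i ->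
     geometric (update th' i ti) i <= geometric (update th' i (th i)) i)
  /\
  (* Fairness *)
  (forall (n : nat) (G G' : profile n) (s1 : 'I_n) (rest : seq 'I_n),
     acyclic G -> acyclic G' ->
     inf_seq G = s1 :: rest -> inf_seq G' = s1 :: rest ->
     progeny G s1 = progeny G' s1 ->
     (forall j k : 'I_n, j \in progeny G s1 -> k \in progeny G s1 ->
        (k \in G j) = (k \in G' j)) ->
     geometric G s1 = geometric G' s1).
Proof.
split; last first.
  move=> n G G' s1 rest _ _ hG hG' _ _.
  have infl H : inf_seq H = s1 :: rest -> influential H s1.
    move=> e; have : s1 \in inf_seq H by rewrite e mem_head.
    by rewrite /inf_seq mem_sort mem_filter => /andP[].
  by rewrite /geometric (infl _ hG) (infl _ hG') hG hG'.
move=> n th th' i ti ac sub' subi.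
set Gt := update th' i ti; set GT := update th' i (th i).
have sGt : forall u, Gt u \subset th u.
  move=> u; rewrite /Gt /update; case: (eqVneq u i) => [->|nui] //; exact: sub'.
have sGT : forall u, GT u \subset th u.
  move=> u; rewrite /GT /update; case: (eqVneq u i) => [->|nui] //; exact: sub'.
have eGtT : forall u v, edge Gt u v -> edge GT u v.
  move=> u v; rewrite !edge_update; case: ifP => // _; exact: (subsetP subi).
have eTt : forall u v, u != i -> edge GT u v -> edge Gt u v.
  by move=> u v nui; rewrite !edge_update (negbTE nui).
have E : update Gt i set0 = update GT i set0.
  by apply: functional_extensionality => k; rewrite /Gt /GT /update; case: (k == i).
have infi : influential Gt i = influential GT i by rewrite /influential E.
rewrite /geometric -infi; case hi: (influential Gt i); last by rewrite lexx.
have hi' : influential GT i by rewrite -infi.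
rewrite (count_inf hi) (count_inf hi').
rewrite lef_pV2 ?posrE ?ltr0n ?expn_gt0 //. rewrite ler_nat leq_exp2l //.
apply: sub_count => j /andP [infj rj].
case: (eqVneq j i) => [->|nji]; first by rewrite hi /rr eqxx.
have rj' : succ GT i j by move: rj; rewrite /rr eq_sym (negbTE nji).
have cji : connect (edge GT) j i.
  apply/negPn/negP => ncji.
  have sji : succ (update GT j set0) j i.
    by move/forallP: infj => /(_ i) /implyP; apply; rewrite eq_sym.
  rewrite (succ_congr (prog_self _ _ _) (prog_update_nreach ncji)) in sji.
  exact: succ_asym sji rj'.
have cjit : connect (edge Gt) j i.
  by apply: conn_gen cji => u v nui _; exact: eTt.
have pi_eq : prog Gt i = prog GT i.
  apply: prog_eq => x; apply/idP/idP; apply: conn_gen => u v nui _.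
  - by rewrite !edge_update (negbTE nui).
  - by rewrite !edge_update (negbTE nui).
have pj_eq : prog Gt j = prog GT j.
  apply: prog_eq => x; apply/idP/idP; apply: conn_gen => u v nuj cuj.
  - case: (eqVneq u i) => [eui|nui]; last exact: eGtT.
    subst u; by move: (noncycle ac sGt cuj cjit) nji => ->; rewrite eqxx.
  - case: (eqVneq u i) => [eui|nui]; last exact: eTt.
    subst u; by move: (noncycle ac sGT cuj cji) nji => ->; rewrite eqxx.
apply/andP; split; last first.
  by rewrite /rr eq_sym (negbTE nji) /= (succ_congr pi_eq pj_eq).
apply/forallP => k; apply/implyP => nkj.
have sk : succ (update GT j set0) j k by move/forallP: infj => /(_ k) /implyP; apply.
have h1 : prog (update Gt j set0) j = prog (update GT j set0) j by rewrite !prog_self.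
have h2 : (prog (update Gt j set0) k <= prog (update GT j set0) k)%N.
  apply: prog_le => u v; rewrite (@edge_update _ Gt) (@edge_update _ GT); case: ifP => // _; exact: eGtT.
move: sk h1 h2; rewrite /succ => *; lia.
Qed.
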